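(* Let $Q_{\mathcal A}=\{(\alpha,U_\alpha):\alpha\in\mathcal{A}(M)\text{ extendible}\}$, where $U_\alpha$ is the largest open set with $(\alpha,U_\alpha)\in\mathrm{EX}(M)$. Then the topological boundary $\partial\iota_{Q_{\mathcal A}}(M)$ of $\iota_{Q_{\mathcal A}}(M)$ in $Q_{\mathcal A}(M)$ is in bijective correspondence with the quotient $\mathcal{B}(M)/\!\equiv$, where $\mathcal{B}(M)=\{(\alpha,U,\{p\}):(\alpha,U)\in\mathrm{EX}(M),\ p\in B(\alpha)\cap U\}$ is the set of all boundary points.
   Context: Conventions: $M$ is an $n$-dimensional smooth manifold (Hausdorff, second countable) with maximal $C^\infty$ atlas $\mathcal{A}(M)$; every chart $\alpha$ has open domain $\mathrm{dom}(\alpha)\subset M$ and open range $\mathrm{ran}(\alpha)\subset\mathbb{R}^n$. For $A\subset\mathbb{R}^n$, $\partial A$ is its boundary in $\mathbb{R}^n$; for $A\subset U\subset\mathbb{R}^n$, $\partial_U A$ is the boundary of $A$ relative to $U$. An admissible boundary point of $\alpha$ is a $p\in\partial\,\mathrm{ran}(\alpha)$ such that every sequence $(x_i)\subset\mathrm{dom}(\alpha)$ with $\alpha(x_i)\to p$ has no accumulation point in $M$; $B(\alpha)$ is the set of these. An extension is a pair $(\alpha,U)$, $U\subset\mathbb{R}^n$ open, $\mathrm{ran}(\alpha)\subset U$, $\emptyset\ne\partial_U\mathrm{ran}(\alpha)\subset B(\alpha)$; $\mathrm{EX}(M)$ is the set of extensions; $\alpha$ is extendible if it has an extension, and then there is a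 unique largest such $U$. A boundary set is $(\alpha,U,V)$ with $(\alpha,U)\in\mathrm{EX}(M)$, $V\subset B(\alpha)\cap U$ (a boundary point if $V=\{p\}$). $(\alpha,U,V)$ covers $(\beta,X,Y)$ if for every sequence $(y_i)\subset\mathrm{dom}(\beta)$ with $(\beta(y_i))$ having an accumulation point in $Y$ there is a subsequence $(v_i)\subset\mathrm{dom}(\alpha)$ of $(y_i)$ with $(\alpha(v_i))$ having an accumulation point in $V$; they are equivalent, $\equiv$, if each covers the other. Completion: for $Q\subset\mathrm{EX}(M)$ let $P=\{(\alpha,\mathrm{ran}(\alpha)):\alpha\in\mathcal{A}(M)\}$, $S_Q=P\cup Q$, $N_{(\alpha,U)}=\mathrm{ran}(\alpha)\cup\partial_U\mathrm{ran}(\alpha)$ with subspace topology of $\mathbb{R}^n$, $N_Q=\bigsqcup_{(\alpha,U)\in S_Q}N_{(\alpha,U)}$ with disjoint-union topology. Identify $x\in N_{(\alpha,U)}$ with $y\in N_{(\beta,X)}$ iff either $x\in\mathrm{ran}(\alpha)$, $y\in\mathrm{ran}(\beta)$, $\beta\circ\alpha^{-1}(x)=y$, or $x\in\partial_U\mathrm{ran}(\alpha)$, $y\in\partial_X\mathrm{ran}(\beta)$, $(\alpha,U,\{x\})\equiv(\beta,X,\{y\})$. $Q(M)$ is the quotient space, $q:N_Q\to Q(M)$ the quotient map, and $\iota_Q:M\to Q(M)$, $\iota_Q(x)=q(\alpha(x))$ for any $\alpha\in\mathcal{A}(M)$ with $x\in\mathrm{dom}(\alpha)$. *)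

(* Defs.v *)
From HB Require Import structures.
From mathcomp Require Import all_boot all_order all_algebra.
From mathcomp Require Import all_classical all_reals all_analysis.
From Stdlib Require Import Relation_Operators.
Set Implicit Arguments. Unset Strict Implicit. Unset Printing Implicit Defensive.
Import Order.TTheory GRing.Theory Num.Theory.
Import numFieldNormedType.Exports.
Local Open Scope classical_set_scope.
Local Open Scope ring_scope.

Section Manifold.
Variables (R : realType) (n : nat).
Notation Rn := 'rV[R]_n.

Definition ebasis (i : 'I_n) : Rn := \row_(j < n) (i == j)%:R.

Fixpoint pd (l : seq 'I_n) (g : Rn -> Rn) : Rn -> Rn :=
  match l with
  | [::] => g
  | i :: l' => fun x => 'D_(ebasis i) (pd l' g) x
  end.

Definition smooth_on (W : set Rn) (g : Rn -> Rn) : Prop :=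
  forall (l : seq 'I_n) (x : Rn), W x ->
    {for x, continuous (pd l g)} /\
    forall i : 'I_n, derivable (pd l g) x (ebasis i).

(* relative boundary of A in U (subspace topology of U in R^n);
   rbdry setT A is the boundary of A in R^n *)
Definition rbdry (U A : set Rn) : set Rn :=
  [set x | U x /\ forall N, nbhs x N ->
      (N `&` A) !=set0 /\ (N `&` (U `\` A)) !=set0].

Variable M : topologicalType.

(* a chart: (domain, map); the values of the map outside the domain are
   irrelevant *)
Definition chart := (set M * (M -> Rn))%type.
Definition cdom (a : chart) : set M := a.1.
Definition cran (a : chart) : set Rn := a.2 @` a.1.

Definition is_chart (a : chart) : Prop :=
  [/\ open (cdom a), open (cran a), set_inj (cdom a) a.2,
      {within cdom a, continuous a.2} &
      exists g : Rn -> M,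
        [/\ {within cran a, continuous g},
            (forall x, cdom a x -> g (a.2 x) = x) &
            (forall y, cran a y -> a.2 (g y) = y)]].

(* beta o alpha^-1 is C^infinity on alpha(dom alpha /\ dom beta) *)
Definition trans_smooth (a b : chart) : Prop :=
  exists g : Rn -> Rn,
    smooth_on (a.2 @` (cdom a `&` cdom b)) g /\
    (forall x, cdom a x -> cdom b x -> g (a.2 x) = b.2 x).

Definition compatible (a b : chart) : Prop :=
  trans_smooth a b /\ trans_smooth b a.

Definition maximal_smooth_atlas (A : set chart) : Prop :=
  [/\ (forall a, A a -> is_chart a),
      (forall a b, A a -> A b -> compatible a b),
      (forall x : M, exists2 a, A a & cdom a x) &
      (forall c, is_chart c -> (forall a, A a -> compatible a c) -> A c)].

Definition smooth_manifold (A : set chart) : Prop :=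
  [/\ hausdorff_space M, @second_countable M & maximal_smooth_atlas A].

Variable A : set chart.

Definition adm_bdry (a : chart) : set Rn :=
  [set p | rbdry setT (cran a) p /\
     forall x : nat -> M, (forall i, cdom a (x i)) ->
       (fun i => a.2 (x i)) @ \oo --> p ->
       cluster (x @ \oo) = set0].

Definition extension (s : chart * set Rn) : Prop :=
  [/\ A s.1, open s.2, cran s.1 `<=` s.2,
      rbdry s.2 (cran s.1) !=set0 &
      rbdry s.2 (cran s.1) `<=` adm_bdry s.1].

Definition bset := (chart * set Rn * set Rn)%type.

Definition boundary_set (t : bset) : Prop :=
  extension (t.1.1, t.1.2) /\ t.2 `<=` adm_bdry t.1.1 `&` t.1.2.

Definition covers (t t' : bset) : Prop :=
  forall y : nat -> M, (forall i, cdom t'.1.1 (y i)) ->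
    (exists2 q, t'.2 q & cluster ((fun i => t'.1.1.2 (y i)) @ \oo) q) ->
    exists phi : nat -> nat, [/\ (forall i, (phi i < phi i.+1)%N),
      (forall i, cdom t.1.1 (y (phi i))) &
      exists2 p, t.2 p & cluster ((fun i => t.1.1.2 (y (phi i))) @ \oo) p].

Definition bequiv (t t' : bset) : Prop := covers t t' /\ covers t' t.

Definition BM : set bset :=
  [set t | exists a U p, [/\ t = (a, U, [set p]), extension (a, U),
                             adm_bdry a p & U p]].

Definition BM_quot : set (set bset) :=
  [set C | exists2 b, BM b & C = [set t | BM t /\ bequiv t b]].

Definition QA : set (chart * set Rn) :=
  [set s | extension s /\ forall U, extension (s.1, U) -> U `<=` s.2].

Section Completion.
Variable Q : set (chart * set Rn).

Definition SQ : set (chart * set Rn) :=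
  [set s | (A s.1 /\ s.2 = cran s.1) \/ Q s].

Definition Nset (s : chart * set Rn) : set Rn :=
  cran s.1 `|` rbdry s.2 (cran s.1).

(* points of the disjoint union N_Q : (index, point) *)
Definition NQ : set ((chart * set Rn) * Rn) :=
  [set z | SQ z.1 /\ Nset z.1 z.2].

Definition ident (z w : (chart * set Rn) * Rn) : Prop :=
  NQ z /\ NQ w /\
  ((cran z.1.1 z.2 /\ cran w.1.1 w.2 /\
     exists2 x, cdom z.1.1 x & z.1.1.2 x = z.2 /\ w.1.1.2 x = w.2)
   \/
   (rbdry z.1.2 (cran z.1.1) z.2 /\ rbdry w.1.2 (cran w.1.1) w.2 /\
     bequiv (z.1.1, z.1.2, [set z.2]) (w.1.1, w.1.2, [set w.2]))).

Definition qeq := clos_refl_sym_trans _ ident.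

Definition qclass (z : (chart * set Rn) * Rn) := [set w | qeq z w].

Definition QMpts : set (set ((chart * set Rn) * Rn)) :=
  [set C | exists2 z, NQ z & C = qclass z].

(* open sets of the quotient topology: q^-1(O) is open in N_Q, i.e. its
   trace on each summand N_s is relatively open *)
Definition Qopen (O : set (set ((chart * set Rn) * Rn))) : Prop :=
  O `<=` QMpts /\
  forall s, SQ s -> exists2 W : set Rn, open W &
    [set x | Nset s x /\ O (qclass (s, x))] = W `&` Nset s.

Definition iotaM : set (set ((chart * set Rn) * Rn)) :=
  [set C | exists a x, [/\ A a, cdom a x & C = qclass ((a, cran a), a.2 x)]].

Definition bdry_iotaM : set (set ((chart * set Rn) * Rn)) :=
  [set C | QMpts C /\ forall O, Qopen O -> O C ->
     (O `&` iotaM) !=set0 /\ (O `&` (QMpts `\` iotaM)) !=set0].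

End Completion.
End Manifold.

(* Main.v *)
Require Import Defs.
From HB Require Import structures.
From mathcomp Require Import all_boot all_order all_algebra.
From mathcomp Require Import all_classical all_reals all_analysis.
From Stdlib Require Import Relation_Operators.
Import numFieldNormedType.Exports.
Set Implicit Arguments.
Local Open Scope classical_set_scope.

Lemma rbdry_notin (R : realType) (n : nat) (U X : set 'rV[R]_n) (x : 'rV[R]_n) :
  open X -> rbdry U X x -> ~ X x.
Proof.
move=> oX [Ux H] Xx.
have hN : nbhs x X by apply: open_nbhs_nbhs; split.
have [_ [y [Xy [_ nXy]]]] := H X hN.
exact: nXy.
Qed.

Lemma cran_open (R : realType) (n : nat) (M : topologicalType)
  (A : set (chart R n M)) a : smooth_manifold A -> A a -> open (cran a).
Proof.
by move=> [_ _ [hc _ _ _]] /hc [].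
Qed.

Lemma covers_refl (R : realType) (n : nat) (M : topologicalType) (t : bset R n M) :
  covers t t.
Proof.
move=> y Hy [q Hq Hc]; exists id; split => //.
by exists q.
Qed.

Lemma covers_trans (R : realType) (n : nat) (M : topologicalType) (t1 t2 t3 : bset R n M) :
  covers t1 t2 -> covers t2 t3 -> covers t1 t3.
Proof.
move=> h12 h23 y Hy Hc.
have [phi [phinc Hd2 Hc2]] := h23 y Hy Hc.
have [psi [psinc Hd1 Hc1]] := h12 (y \o phi) Hd2 Hc2.
exists (phi \o psi); split => //.
move=> i /=.
have hom := homo_ltn ltn_trans phinc.
exact: hom.
Qed.

Definition bz (R : realType) (n : nat) (M : topologicalType)
  (z : (chart R n M * set 'rV[R]_n) * 'rV[R]_n) : bset R n M :=
  (z.1.1, z.1.2, [set z.2]).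

Lemma NQ_A (R : realType) (n : nat) (M : topologicalType)
  (A : set (chart R n M)) z : NQ A (QA A) z -> A z.1.1.
Proof.
by move=> [[[]|[[]]]].
Qed.

Lemma qeq_inv (R : realType) (n : nat) (M : topologicalType)
  (A : set (chart R n M)) (HA : smooth_manifold A) z w :
  qeq A (QA A) z w ->
  (NQ A (QA A) z <-> NQ A (QA A) w) /\
  (NQ A (QA A) z -> ((cran z.1.1 z.2 <-> cran w.1.1 w.2) /\
     (~ cran z.1.1 z.2 -> bequiv (bz z) (bz w)))).
Proof.
elim => {z w}.
- move=> z w [Nz [Nw [[cz [cw _]] | [bz' [bw be]]]]].
    split; first tauto.
    by move=> _; split; [tauto|].
  have nz := rbdry_notin (cran_open HA (NQ_A Nz)) bz'.
  have nw := rbdry_notin (cran_open HA (NQ_A Nw)) bw.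
  split; first tauto.
  by move=> _; split; [tauto|].
- move=> z; split; first tauto.
  by move=> _; split; [tauto| move=> _; split; apply: covers_refl].
- move=> z w _ [IH1 IH2]; split; first tauto.
  move=> Nw; have [i1 i2] := IH2 (proj2 IH1 Nw).
  split; first tauto.
  move=> nw.
  have [c1 c2] := i2 (fun h => nw (proj1 i1 h)).
  by split.
- move=> x y z _ [IHa IHb] _ [IHc IHd]; split; first tauto.
  move=> Nx; have [i1 i2] := IHb Nx.
  have [j1 j2] := IHd (proj1 IHa Nx).
  split; first tauto.
  move=> nx.
  have [c1 c2] := i2 nx.
  have [d1 d2] := j2 (fun h => nx (proj2 i1 h)).
  split; apply: covers_trans; eassumption.
Qed.

Lemma qclass_eq (R : realType) (n : nat) (M : topologicalType)
  (A : set (chart R n M)) Q z w :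
  qeq A Q z w -> qclass A Q z = qclass A Q w.
Proof.
move=> H; apply/seteqP; split => x /= Hx.
- by eapply rst_trans; [apply: rst_sym; exact: H| exact: Hx].
- by eapply rst_trans; [exact: H| exact: Hx].
Qed.

Lemma qclass_refl (R : realType) (n : nat) (M : topologicalType)
  (A : set (chart R n M)) Q z : qclass A Q z z.
Proof. exact: rst_refl. Qed.

Lemma SQ_A (R : realType) (n : nat) (M : topologicalType)
  (A : set (chart R n M)) s : SQ A (QA A) s -> A s.1.
Proof. by move=> [[]|[[]]]. Qed.

Lemma iota_open (R : realType) (n : nat) (M : topologicalType)
  (A : set (chart R n M)) (HA : smooth_manifold A) :
  Qopen A (QA A) (iotaM A (QA A)).
Proof.
split.
  move=> C [a [x [Aa dx ->]]].
  exists ((a, cran a), a.2 x) => //.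
  split; first by left.
  by left; exists x.
move=> s Ss; exists (cran s.1); first exact: cran_open HA (SQ_A Ss).
apply/seteqP; split => x /=.
- move=> [Ns [a [y [Aa dy Heq]]]]; split => //.
  have hq : qeq A (QA A) (s, x) ((a, cran a), a.2 y).
    have : qclass A (QA A) (s, x) ((a, cran a), a.2 y).
      by rewrite Heq; exact: qclass_refl.
    by [].
  have [_ H2] := qeq_inv HA hq.
  have [[_ H3] _] := H2 (conj Ss Ns).
  by apply: H3; exists y.
- move=> [cx Ns]; split => //.
  have cx' := cx; case: cx' => y dy ey.
  exists s.1, y; split.
  + exact: SQ_A Ss.
  + exact: dy.
  +
  apply: qclass_eq; apply: rst_step.
    split; first exact: (conj Ss Ns).
    split.
      split; first by left; split => //; exact: SQ_A Ss.
      by left; exists y.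
    left; split => //; split; first by exists y.
    by exists y.
Qed.

Lemma iota_of_cran (R : realType) (n : nat) (M : topologicalType)
  (A : set (chart R n M)) z :
  NQ A (QA A) z -> cran z.1.1 z.2 -> iotaM A (QA A) (qclass A (QA A) z).
Proof.
case: z => [s x] [Ss Ns] cx.
have cx' := cx; case: cx' => y dy ey.
exists s.1, y; split.
+ exact: SQ_A Ss.
+ exact: dy.
+ apply: qclass_eq; apply: rst_step.
  split; first exact: (conj Ss Ns).
  split.
    split; first by left; split => //; exact: SQ_A Ss.
    by left; exists y.
  left; split => //; split; first by exists y.
  by exists y.
Qed.

Lemma not_iota (R : realType) (n : nat) (M : topologicalType)
  (A : set (chart R n M)) (HA : smooth_manifold A) z :
  NQ A (QA A) z -> ~ cran z.1.1 z.2 -> ~ iotaM A (QA A) (qclass A (QA A) z).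
Proof.
move=> Nz nz [a [y [Aa dy Heq]]].
have hq : qeq A (QA A) z ((a, cran a), a.2 y).
  have : qclass A (QA A) z ((a, cran a), a.2 y).
    by rewrite Heq; exact: qclass_refl.
  by [].
have [_ H2] := qeq_inv HA hq.
have [[_ H3] _] := H2 Nz.
by apply: nz; apply: H3; exists y.
Qed.

Lemma Nset_rbdry (R : realType) (n : nat) (M : topologicalType)
  (A : set (chart R n M)) z :
  NQ A (QA A) z -> ~ cran z.1.1 z.2 -> rbdry z.1.2 (cran z.1.1) z.2.
Proof. by move=> [_ [|]]. Qed.

Lemma bdry_char (R : realType) (n : nat) (M : topologicalType)
  (A : set (chart R n M)) (HA : smooth_manifold A) C :
  bdry_iotaM A (QA A) C ->
  exists z, [/\ C = qclass A (QA A) z, NQ A (QA A) z & ~ cran z.1.1 z.2].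
Proof.
move=> [[z Nz ->] H]; exists z; split => // cz.
have [_ [D [iD [_ niD]]]] := H _ (iota_open HA) (iota_of_cran Nz cz).
exact: niD.
Qed.

Lemma boundary_in (R : realType) (n : nat) (M : topologicalType)
  (A : set (chart R n M)) (HA : smooth_manifold A) z :
  NQ A (QA A) z -> ~ cran z.1.1 z.2 -> bdry_iotaM A (QA A) (qclass A (QA A) z).
Proof.
move=> Nz nz; split; first by exists z.
move=> O [_ HO] Oz.
have rb := Nset_rbdry Nz nz.
case: z Nz nz Oz rb => [s p] [Ss Ns] nz Oz rb.
have [W oW HW] := HO s Ss.
have Wp : W p.
  have : [set x | Nset s x /\ O (qclass A (QA A) (s, x))] p by split.
  by rewrite HW => -[].
have hN : nbhs p W by apply: open_nbhs_nbhs; split.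
have [[x [Wx cx]] _] := rb.2 W hN.
have Nx : Nset s x by left.
have Ox : O (qclass A (QA A) (s, x)).
  have : (W `&` Nset s) x by split.
  by rewrite -HW => -[].
split.
  exists (qclass A (QA A) (s, x)); split => //.
  by apply: (iota_of_cran (z := (s, x))).
exists (qclass A (QA A) (s, p)); split => //; split; first by exists (s, p).
exact: (not_iota HA (z := (s, p))).
Qed.

Lemma BM_bz (R : realType) (n : nat) (M : topologicalType)
  (A : set (chart R n M)) (HA : smooth_manifold A) z :
  NQ A (QA A) z -> ~ cran z.1.1 z.2 -> BM A (bz z).
Proof.
move=> Nz nz; have rb := Nset_rbdry Nz nz.
case: z Nz nz rb => [[a U] p] [Ss Ns] nz rb /=.
case: Ss => [[Aa /= EU]|[Ext _]].
  by exfalso; apply: nz; move: rb => [+ _]; rewrite EU.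
exists a, U, p; split => //.
- by case: Ext => _ _ _ _ H5; apply: H5.
- exact: rb.1.
Qed.

Lemma max_ext (R : realType) (n : nat) (M : topologicalType)
  (A : set (chart R n M)) (HA : smooth_manifold A) a U p :
  extension A (a, U) -> adm_bdry a p -> U p ->
  exists U', [/\ QA A (a, U'), U' p & rbdry U' (cran a) p].
Proof.
move=> Ext adm Up.
pose U' := \bigcup_(U0 in [set U0 | extension A (a, U0)]) U0.
have [Aa oU sub ne sb] := Ext.
have oc := cran_open HA Aa.
have rbU' : forall x, rbdry U' (cran a) x ->
    exists2 U0, extension A (a, U0) & rbdry U0 (cran a) x.
  move=> x rx; have nx := rbdry_notin oc rx.
  case: rx => -[U0 E0 U0x] H; exists U0 => //; split => // N hN.
  split; first exact: (H N hN).1.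
  by exists x; split; [exact: nbhs_singleton hN|].
have nap := rbdry_notin oc adm.1.
have pin : rbdry U' (cran a) p.
  split; first by exists U.
  move=> N hN; split; first exact: (adm.1.2 N hN).1.
  exists p; split; first exact: nbhs_singleton hN.
  by split => //; exists U.
exists U'; split => //; last by exists U.
split.
- split => //=.
  + rewrite /U'; apply: bigcup_open => i /= [_ oi _ _ _]; exact: oi.
  + move=> x cx; exists U => //; exact: sub cx.
  + by exists p.
  + move=> x /rbU' [U0 [_ _ _ _ sb0] r0]; exact: sb0.
- move=> V EV x Vx /=; by exists V.
Qed.

Definition fmap (R : realType) (n : nat) (M : topologicalType)
  (A : set (chart R n M)) (C : set ((chart R n M * set 'rV[R]_n) * 'rV[R]_n)) :
  set (bset R n M) :=
  [set t | BM A t /\ exists z, [/\ C z, NQ A (QA A) z, ~ cran z.1.1 z.2 &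
                                    bequiv t (bz z)]].

Lemma fC (R : realType) (n : nat) (M : topologicalType)
  (A : set (chart R n M)) (HA : smooth_manifold A) z0 :
  NQ A (QA A) z0 -> ~ cran z0.1.1 z0.2 ->
  fmap A (qclass A (QA A) z0) = [set t | BM A t /\ bequiv t (bz z0)].
Proof.
move=> N0 n0; apply/seteqP; split => t /=.
- move=> [Bt [z [Cz Nz nz [c1 c2]]]]; split => //.
  have [_ H] := qeq_inv HA Cz.
  have [_ H2] := H N0.
  have [d1 d2] := H2 n0.
  split; apply: covers_trans; eassumption.
- move=> [Bt be]; split => //; exists z0; split => //; exact: qclass_refl.
Qed.

Unset Implicit Arguments.

Theorem mainTheorem7 (R : realType) (n : nat) (M : topologicalType)
    (A : set (chart R n M)) :
  smooth_manifold A ->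
  exists f : set ((chart R n M * set 'rV[R]_n) * 'rV[R]_n) -> set (bset R n M),
    set_bij (bdry_iotaM A (QA A)) (BM_quot A) f.
Proof.
move=> HA; exists (fmap A); split.
- move=> C /(bdry_char HA) [z0 [-> N0 n0]] /=.
  rewrite (fC HA N0 n0); exists (bz z0) => //.
  exact (BM_bz HA N0 n0).
- move=> C1 C2 /set_mem /(bdry_char HA) [z1 [-> N1 n1]] /set_mem /(bdry_char HA) [z2 [-> N2 n2]].
  rewrite (fC HA N1 n1) (fC HA N2 n2) => Heq.
  have : [set t | BM A t /\ bequiv t (bz z1)] (bz z1).
    by split; [exact (BM_bz HA N1 n1)| split; apply: covers_refl].
  rewrite Heq => -[_ be].
  apply: qclass_eq; apply: rst_step.
  split => //; split => //; right; split; first exact (Nset_rbdry N1 n1).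
  by split; first exact (Nset_rbdry N2 n2).
- move=> D [b Bb ->].
  case: Bb => a [U [p [-> Ext adm Up]]].
  have [U' [QU U'p rb]] := max_ext HA Ext adm Up.
  have Aa : A a by case: Ext.
  have N0 : NQ A (QA A) ((a, U'), p) by split; right.
  have n0 : ~ cran a p := rbdry_notin (cran_open HA Aa) rb.
  exists (qclass A (QA A) ((a, U'), p)); first exact: boundary_in.
  rewrite (fC HA N0 n0).
  by [].
Qed.
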